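(* Let $\mathcal{L} \subset \mathbb{R}^n$ be a stable full-rank lattice such that every decomposition $\mathcal{L} \cong \mathcal{L}_1 \oplus \mathcal{L}_2$ with $\mathcal{L}_2$ non-trivial and indecomposable has $\mathrm{rank}(\mathcal{L}_2) = 1$. Then $\mathcal{L} \cong \mathbb{Z}^n$.
   Context: A lattice of rank $d$ is the set of integer combinations of $d$ linearly independent vectors $\mathbf{B}\in\mathbb{R}^{n\times d}$; $\det(\mathcal{L})=\sqrt{\det(\mathbf{B}^T\mathbf{B})}$, $\det(\{\vec 0\}):=1$. A sublattice is any additive subgroup. A lattice $\mathcal{L}$ is stable if $\det(\mathcal{L}) = 1$ and $\det(\mathcal{L}') \geq 1$ for all sublattices $\mathcal{L}' \subseteq \mathcal{L}$. The direct sum $\oplus$ of lattices is the orthogonal direct sum; $\cong$ means isomorphic via a linear isometry. A lattice is decomposable if it is isomorphic to a direct sum of non-trivial lattices of strictly lower rank, and indecomposable otherwise; $\mathcal{L}_1$ may be the trivial lattice $\{\vec 0\}$. *)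

(* Defs.v *)
From HB Require Import structures.
From mathcomp Require Import all_boot all_order all_algebra.
From mathcomp Require Import reals.
Set Implicit Arguments. Unset Strict Implicit. Unset Printing Implicit Defensive.
Import Order.TTheory GRing.Theory Num.Theory.
Local Open Scope ring_scope.

(* A lattice of rank d in R^m is given by a basis: the d rows of a
   row-free matrix B : 'M_(d, m) (vectors are row vectors). *)
Section Lattices.
Variable R : realType.

Definition in_lat (d m : nat) (B : 'M[R]_(d, m)) (v : 'rV[R]_m) : Prop :=
  exists z : 'rV[int]_d, v = map_mx (fun x : int => x%:~R) z *m B.

Definition in_span (d m : nat) (B : 'M[R]_(d, m)) (v : 'rV[R]_m) : Prop :=
  exists c : 'rV[R]_d, v = c *m B.

(* det(L) = sqrt(det(Gram matrix)); for d = 0 this is sqrt 1 = 1. *)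
Definition lat_det (d m : nat) (B : 'M[R]_(d, m)) : R :=
  Num.sqrt (\det (B *m B^T)).

(* L(B) ~= L(B'): there is a linear map (right multiplication by f) which is
   an isometry on span(L(B)) and maps L(B) onto L(B'). *)
Definition lat_iso (d m d' m' : nat) (B : 'M[R]_(d, m)) (B' : 'M[R]_(d', m')) : Prop :=
  exists f : 'M[R]_(m, m'),
    (forall v, in_span B v -> (v *m f) *m (v *m f)^T = v *m v^T) /\
    (forall v, in_lat B v -> in_lat B' (v *m f)) /\
    (forall w, in_lat B' w -> exists2 v, in_lat B v & w = v *m f).

Definition lat_dsum (d1 m1 d2 m2 : nat) (B1 : 'M[R]_(d1, m1)) (B2 : 'M[R]_(d2, m2))
  : 'M[R]_(d1 + d2, m1 + m2) := block_mx B1 0 0 B2.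

(* Stable: det L = 1 and every sublattice (subgroup of L, which is itself a
   lattice with some basis B') has det >= 1. *)
Definition lat_stable (d m : nat) (B : 'M[R]_(d, m)) : Prop :=
  lat_det B = 1 /\
  forall (d' : nat) (B' : 'M[R]_(d', m)), row_free B' ->
    (forall v, in_lat B' v -> in_lat B v) -> 1 <= lat_det B'.

Definition lat_decomposable (d m : nat) (B : 'M[R]_(d, m)) : Prop :=
  exists (d1 m1 d2 m2 : nat) (B1 : 'M[R]_(d1, m1)) (B2 : 'M[R]_(d2, m2)),
    [/\ row_free B1, row_free B2, (0 < d1 < d)%N, (0 < d2 < d)%N &
        lat_iso B (lat_dsum B1 B2)].

Definition lat_indecomposable (d m : nat) (B : 'M[R]_(d, m)) : Prop :=
  ~ lat_decomposable B.

End Lattices.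

(* Main.v *)
Require Import Defs.
From HB Require Import structures.
From mathcomp Require Import all_boot all_order all_algebra.
From mathcomp Require Import reals.
From Stdlib Require Import Classical.
From mathcomp Require Import ring lra zify.
Set Implicit Arguments. Unset Strict Implicit. Unset Printing Implicit Defensive.
Import Order.TTheory GRing.Theory Num.Theory.
Local Open Scope ring_scope.

Section L.
Variable R : realType.
Local Notation iM := (map_mx (fun x : int => x%:~R : R)).

Lemma iM_mul p q r (A : 'M[int]_(p,q)) (C : 'M[int]_(q,r)) : iM (A *m C) = iM A *m iM C.
Proof. exact: (map_mxM (intmul (1:R))). Qed.

Lemma iM_tr p q (A : 'M[int]_(p,q)) : iM A^T = (iM A)^T.
Proof. by apply/matrixP=> i j; rewrite !mxE. Qed.

Lemma iM_add p q (A C : 'M[int]_(p,q)) : iM (A + C) = iM A + iM C.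
Proof. by apply/matrixP=> i j; rewrite !mxE intrD. Qed.

Lemma iM1 p : iM (1%:M : 'M[int]_p) = 1%:M.
Proof. exact: (map_mx1 (intmul (1:R))). Qed.

Lemma in_lat_row d m (C : 'M[R]_(d,m)) i : in_lat C (row i C).
Proof. by exists (row i 1%:M); rewrite map_row iM1 -row_mul mul1mx. Qed.

Lemma lat_mx d m p (C : 'M[R]_(d,m)) (X : 'M[R]_(p,m)) :
  (forall i, in_lat C (row i X)) -> exists Z : 'M[int]_(p,d), X = iM Z *m C.
Proof.
move=> H; have [z Hz] := fin_all_exists H.
exists (\matrix_i z i); apply/row_matrixP => i.
by rewrite row_mul -map_row rowK -Hz.
Qed.

Lemma in_lat_trans d m p (C : 'M[R]_(d,m)) (X : 'M[R]_(p,m)) v :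
  (forall i, in_lat C (row i X)) -> in_lat X v -> in_lat C v.
Proof.
move=> /lat_mx [Z ->] [z ->]; exists (z *m Z).
by rewrite iM_mul mulmxA.
Qed.

Lemma in_lat_span d m (C : 'M[R]_(d,m)) v : in_lat C v -> in_span C v.
Proof. by case=> z ->; exists (iM z). Qed.

Lemma rowsub_row m m' k (f : 'I_m' -> 'I_m) (W : 'M[R]_(m,k)) i :
  row i (rowsub f W) = row (f i) W.
Proof. by apply/rowP=> j; rewrite !mxE. Qed.

Lemma mulT_entry p q k (X : 'M[R]_(p,k)) (Y : 'M[R]_(q,k)) i j :
  (X *m Y^T) i j = (row i X *m (row j Y)^T) 0 0.
Proof. by rewrite !mxE; apply: eq_bigr => l _; rewrite !mxE. Qed.

Lemma tr11 (a : 'M[R]_1) : a^T = a.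
Proof. by apply/matrixP=> i j; rewrite !ord1 mxE. Qed.

Lemma dot_sym k (x y : 'rV[R]_k) : y *m x^T = x *m y^T.
Proof. by rewrite -[LHS]tr11 trmx_mul trmxK. Qed.

Lemma self_dot0 k (x : 'rV[R]_k) : x *m x^T = 0 -> x = 0.
Proof.
move=> /matrixP/(_ 0 0); rewrite !mxE => H.
have H' : forall i, x 0 i * x 0 i = 0.
  have H1 : \sum_(j < k) x 0 j * x 0 j = 0.
    by move: H; under eq_bigr do rewrite mxE.
  move=> i; apply: (psumr_eq0P _ H1) => // j _; by rewrite -expr2 sqr_ge0.
by apply/rowP=> i; rewrite mxE; move/eqP: (H' i); rewrite mulf_eq0 orbb => /eqP.
Qed.

Lemma polar d m p (C : 'M[R]_(d,m)) (f : 'M[R]_(m,p)) :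
  (forall v, in_span C v -> (v *m f) *m (v *m f)^T = v *m v^T) ->
  forall x y, in_span C x -> in_span C y ->
  (x *m f) *m (y *m f)^T = x *m y^T.
Proof.
move=> H x y [a ->] [b ->].
have Hs : forall c, in_span C (c *m C) by move=> c; exists c.
have := H _ (Hs (a + b)); have := H _ (Hs a); have := H _ (Hs b).
rewrite !mulmxDl !linearD /= ?mulmxDr ?mulmxDl.
rewrite (dot_sym (a *m C *m f) (b *m C *m f)) (dot_sym (a *m C) (b *m C)).
move=> Hb Ha; rewrite Ha Hb.
move: (a *m C *m f *m (b *m C *m f)^T) (a *m C *m (b *m C)^T)
  (a *m C *m f *m (a *m C *m f)^T) (b *m C *m f *m (b *m C *m f)^T) => X Y U V.
move=> /matrixP/(_ 0 0); rewrite !mxE => E.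
apply/matrixP=> i j; rewrite !ord1. lra.
Qed.


Section Sel.
Variable n : nat.
Definition ev (A : {set 'I_n}) (k : 'I_#|A|) : 'I_n := enum_val k.
Definition Sel (A : {set 'I_n}) : 'M[R]_(#|A|, n) := rowsub (@ev A) 1%:M.
Definition SelZ (A : {set 'I_n}) : 'M[int]_(#|A|, n) := rowsub (@ev A) 1%:M.

Lemma SelE (A : {set 'I_n}) : Sel A = iM (SelZ A).
Proof. by apply/matrixP=> i j; rewrite !mxE; case: eqP. Qed.

Lemma Sel_mulT (A A' : {set 'I_n}) : Sel A *m (Sel A')^T = \matrix_(i,j) (ev i == ev j)%:R.
Proof. by rewrite /Sel mul_rowsub_mx mul1mx; apply/matrixP=> i j; rewrite !mxE eq_sym. Qed.

Lemma Sel_disj (A A' : {set 'I_n}) : (forall x, x \in A -> x \notin A') -> Sel A *m (Sel A')^T = 0.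
Proof.
move=> H; rewrite Sel_mulT; apply/matrixP=> i j; rewrite !mxE.
case: eqP => // E; have := H _ (enum_valP i); rewrite /ev in E; rewrite E.
by rewrite (enum_valP j).
Qed.

Lemma Sel_id (A : {set 'I_n}) : Sel A *m (Sel A)^T = 1%:M.
Proof.
by rewrite Sel_mulT; apply/matrixP=> i j; rewrite !mxE /ev (inj_eq enum_val_inj).
Qed.

Lemma Sel_sum (A : {set 'I_n}) : (Sel (~:A))^T *m Sel (~:A) + (Sel A)^T *m Sel A = 1%:M.
Proof.
apply/matrixP=> i j; rewrite !mxE.
have E : forall A0 : {set 'I_n}, \sum_k ((Sel A0)^T i k * Sel A0 k j)
   = \sum_(x in A0) ((x == i)%:R * (x == j)%:R).
  move=> A0; rewrite [RHS]big_enum_val; apply: eq_bigr => k _; rewrite !mxE.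
  by rewrite /ev eq_sym.
rewrite !E.
have -> : ((i == j)%:R : R) = \sum_x ((x == i)%:R * (x == j)%:R).
  have /matrixP/(_ i j) := mul1mx (1%:M : 'M[R]_n); rewrite !mxE => <-.
  by apply: eq_bigr => x _; rewrite !mxE eq_sym.
rewrite [RHS](bigID (mem A)) /= addrC; congr (_ + _).
by apply: eq_bigl => x; rewrite in_setC.
Qed.
End Sel.

Lemma dsum_mul p d1 m1 d2 m2 (a : 'M[R]_(p,d1)) (b : 'M[R]_(p,d2))
  (E1 : 'M[R]_(d1,m1)) (E2 : 'M[R]_(d2,m2)) :
  row_mx a b *m lat_dsum E1 E2 = row_mx (a *m E1) (b *m E2).
Proof. by rewrite /lat_dsum mul_row_block !mulmx0 addr0 add0r. Qed.

Lemma norm_row p1 p2 (x : 'rV[R]_p1) (y : 'rV[R]_p2) :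
  row_mx x y *m (row_mx x y)^T = x *m x^T + y *m y^T.
Proof. by rewrite tr_row_mx mul_row_col. Qed.

Lemma iso_split n (B W : 'M[R]_n) (A : {set 'I_n}) :
  W \in unitmx ->
  (forall v, in_lat W v <-> in_lat B v) ->
  (forall i j, i \notin A -> j \in A -> row i W *m (row j W)^T = 0) ->
  lat_iso B (lat_dsum (rowsub (@ev n (~:A)) W) (rowsub (@ev n A) W)).
Proof.
move=> Wu HL Horth.
set E1 := rowsub _ W; set E2 := rowsub _ W.
have E1E : E1 = Sel (~:A) *m W by rewrite /E1 rowsubE.
have E2E : E2 = Sel A *m W by rewrite /E2 rowsubE.
have E12 : E1 *m E2^T = 0.
  apply/matrixP=> k l; rewrite mulT_entry !rowsub_row Horth ?mxE //.
    by have := enum_valP k; rewrite in_setC.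
  exact: enum_valP.
have E21 : E2 *m E1^T = 0 by rewrite -[LHS]trmxK trmx_mul trmxK E12 trmx0.
set S1 := Sel (~:A); set S2 := Sel A.
pose f := invmx W *m row_mx (S1^T *m E1) (S2^T *m E2).
have vf : forall v : 'rV_n, v *m f = row_mx (v *m invmx W *m S1^T) (v *m invmx W *m S2^T) *m lat_dsum E1 E2.
  by move=> v; rewrite dsum_mul /f mulmxA mul_mx_row !mulmxA.
have Wv : forall c : 'rV_n, c *m W = c *m S1^T *m E1 + c *m S2^T *m E2.
  by move=> c; rewrite E1E E2E !mulmxA -mulmxDl -!(mulmxA c) -mulmxDr Sel_sum mulmx1.
exists f; split; [|split].
- move=> v _; rewrite vf dsum_mul norm_row.
  set a := v *m invmx W *m S1^T; set b := v *m invmx W *m S2^T.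
  transitivity ((a *m E1 + b *m E2) *m (a *m E1 + b *m E2)^T); last first.
    by rewrite -Wv mulmxKV.
  have c1 : a *m E1 *m (b *m E2)^T = 0.
    by rewrite trmx_mul mulmxA -(mulmxA a) E12 mulmx0 mul0mx.
  have c2 : b *m E2 *m (a *m E1)^T = 0.
    by rewrite trmx_mul mulmxA -(mulmxA b) E21 mulmx0 mul0mx.
  by rewrite linearD /= !mulmxDl !mulmxDr c1 c2 addr0 add0r.
- move=> v /HL [z ->].
  exists (row_mx (z *m (SelZ (~:A))^T) (z *m (SelZ A)^T)).
  by rewrite vf mulmxK // map_row_mx !iM_mul !iM_tr -!SelE.
- move=> w [z ->].
  rewrite -[z]hsubmxK map_row_mx dsum_mul.
  set z1 := lsubmx z; set z2 := rsubmx z.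
  exists ((iM z1 *m S1 + iM z2 *m S2) *m W).
    apply/HL; exists (z1 *m SelZ (~:A) + z2 *m SelZ A).
    by rewrite iM_add !iM_mul -!SelE.
  rewrite vf mulmxK // dsum_mul !mulmxDl -!mulmxA.
  rewrite !(mulmxA S1) !(mulmxA S2) /S1 /S2 !Sel_id !Sel_disj ?mul0mx ?mulmx0 ?addr0 ?add0r ?mul1mx //.
  + by move=> x; rewrite in_setC.
  + by move=> x; rewrite in_setC negbK.
Qed.


Lemma int_unit_sq (a b : int) : a * b = 1 -> a * a = 1.
Proof.
move=> h; have := intUnitRing.unitzPl (n:=b) (m:=a).
rewrite mulrC => /(_ h); nia.
Qed.

Lemma row_rV m (x : 'rV[R]_m) k : row k x = x.
Proof. by apply/rowP=> j; rewrite !mxE ord1. Qed.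

Section Frame.
Variables (n : nat) (B : 'M[R]_n).
Hypothesis HB : row_free B.

Definition frame (W : 'M[R]_n) (g : 'I_n -> 'I_n.+1) :=
  (forall v, in_lat W v <-> in_lat B v) /\
  (forall i j, g i != g j -> row i W *m (row j W)^T = 0).

Lemma frame_unit W g : frame W g -> W \in unitmx.
Proof.
case=> HL _; have [Z EZ] : exists Z : 'M[int]_n, B = iM Z *m W.
  by apply: lat_mx => i; apply/HL; apply: in_lat_row.
rewrite -row_free_unit /row_free eqn_leq rank_leq_col /=.
by move: HB; rewrite /row_free => /eqP {1}<-; rewrite EZ mxrankM_maxr.
Qed.

Lemma frame_final W g : frame W g -> injective g -> lat_stable B ->
  lat_iso B (1%:M : 'M[R]_n).
Proof.
move=> Fr ginj [detB Hst]; have Wu := frame_unit Fr.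
case: Fr => HL Horth.
set G := W *m W^T.
have Goff : forall i j, i != j -> G i j = 0.
  by move=> i j ij; rewrite /G mulT_entry Horth ?mxE // (inj_eq ginj).
have [V EV] : exists V : 'M[int]_n, B = iM V *m W.
  by apply: lat_mx => i; apply/HL; apply: in_lat_row.
have [U EU] : exists U : 'M[int]_n, W = iM U *m B.
  by apply: lat_mx => i; apply/HL; apply: in_lat_row.
have dBB : \det (B *m B^T) = 1.
  have h0 : 0 <= \det (B *m B^T) by rewrite det_mulmx det_tr -expr2 sqr_ge0.
  by rewrite -(sqr_sqrtr h0); move: detB; rewrite /lat_det => ->; rewrite expr1n.
have dW : \det W != 0 by move: Wu; rewrite unitmxE unitfE.
have dUV : (\det U * \det V) = 1.
  apply: (@intr_inj R); rewrite rmorphM /= -!(det_map_mx (intmul (1:R))) /=.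
  apply: (mulIf dW); rewrite mul1r -mulrA -det_mulmx -EV -det_mulmx -EU.
  done.
have dG : \det G = 1.
  have dB2 : \det B ^+ 2 = 1 by rewrite expr2 -{2}det_tr -det_mulmx.
  have dWE : \det W = (\det U)%:~R * \det B.
    by rewrite {1}EU det_mulmx (det_map_mx (intmul (1:R))).
  rewrite /G det_mulmx det_tr dWE mulrACA -(expr2 (\det B)) dB2 mulr1 -rmorphM /=.
  by rewrite (int_unit_sq dUV).
have Gge1 : forall i, 1 <= G i i.
  move=> i; set r := row i W.
  have rf : row_free r.
    apply/row_freeP; exists (invmx W *m (row i 1%:M)^T).
    rewrite mulmxA /r -row_mul mulmxV //.
    apply/matrixP=> a b; rewrite !ord1 -mulT_entry trmx1 mulmx1 !mxE eqxx //.
  have := Hst 1%N r rf.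
  have H1 : forall v, in_lat r v -> in_lat B v.
    move=> v Hv; apply/HL; apply: (in_lat_trans _ Hv) => k.
    by rewrite row_rV; apply: in_lat_row.
  move=> /(_ H1); rewrite /lat_det det_mx11 -mulT_entry -/G => Hs.
  have G0 : 0 <= G i i.
    by rewrite /G mulT_entry !mxE sumr_ge0 // => k _; rewrite !mxE -expr2 sqr_ge0.
  by rewrite -(sqr_sqrtr G0) exprn_ege1.
have Gd : G = diag_mx (\row_i G i i).
  apply/matrixP=> i j; rewrite [RHS]mxE [_ 0 i]mxE; case: (eqVneq i j) => [->|ij].
    by rewrite mulr1n.
  by rewrite Goff // mulr0n.
have Gp : \prod_i G i i = 1.
  transitivity (\det G); last exact: dG.
  by rewrite [X in _ = \det X]Gd det_diag; apply: eq_bigr => i _; rewrite [RHS]mxE.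
have G1 : forall j, G j j = 1.
  move=> j; apply/le_anti; rewrite Gge1 andbT.
  have P1 : 1 <= \prod_(i | i != j) G i i.
    by apply: (big_ind (fun x => 1 <= x)) => // x y; apply: mulr_ege1.
  rewrite -Gp (bigD1 j) //=; have := Gge1 j; nra.
have WWT : W *m W^T = 1%:M.
  apply/matrixP=> i j; rewrite [RHS]mxE; case: (eqVneq i j) => [->|ij].
    by rewrite G1.
  by rewrite Goff.
have WTW := mulmx1C WWT.
exists W^T; split; [|split].
- by move=> v _; rewrite trmx_mul trmxK mulmxA -(mulmxA v) WTW mulmx1.
- by move=> v /HL [z ->]; exists z; rewrite -mulmxA WWT.
- move=> w [z ->]; exists (iM z *m W); last by rewrite -mulmxA WWT.
  by apply/HL; exists z.
Qed.


Definition pairs (g : 'I_n -> 'I_n.+1) := [set ij : 'I_n * 'I_n | g ij.1 != g ij.2].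

Lemma refine W g (t : 'I_n.+1) :
  frame W g -> lat_decomposable (rowsub (@ev n [set k | g k == t]) W) ->
  exists W' g', frame W' g' /\ (#|pairs g| < #|pairs g'|)%N.
Proof.
set A := [set k | g k == t].
move=> Fr [d1 [m1 [d2 [m2 [B1 [B2 [rf1 rf2 hd1 hd2 [f [Hiso [Hlat Honto]]]]]]]]]].
set E := rowsub (@ev n A) W.
have Wu := frame_unit Fr; case: Fr => HL Horth.
set D := lat_dsum B1 B2.
have [P [HP1 HP2]] : exists P : 'M[R]_(d1 + d2, n),
    (forall r, in_lat E (row r P)) /\ P *m f = D.
  have := fun r => Honto _ (in_lat_row D r).
  move/fin_all_exists2 => [p Hp1 Hp2]; exists (\matrix_r p r); split.
    by move=> r; rewrite rowK.
  by apply/row_matrixP => r; rewrite row_mul rowK -Hp2.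
have [Z EZ] := lat_mx HP1.
have EinP : forall j, in_lat P (row j E).
  move=> j; have [y Hy] := Hlat _ (in_lat_row E j).
  exists y; apply/eqP; rewrite -subr_eq0; apply/eqP; apply: self_dot0.
  set x := row j E - iM y *m P.
  have xs : in_span E x.
    by exists ('e_j - iM y *m iM Z); rewrite /x mulmxBl -rowE EZ mulmxA.
  rewrite -(Hiso x xs).
  have -> : x *m f = 0 by rewrite /x mulmxBl Hy -mulmxA HP2 subrr.
  by rewrite mul0mx.
have [Y EY] := lat_mx EinP.
have rfD : row_free D.
  move/row_freeP: rf1 => [K1 HK1]; move/row_freeP: rf2 => [K2 HK2].
  apply/row_freeP; exists (block_mx K1 0 0 K2).
  rewrite /D /lat_dsum mulmx_block !mulmx0 !mul0mx !addr0 !add0r HK1 HK2.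
  by rewrite -scalar_mx_block.
have rfE : row_free E.
  apply/row_freeP; exists (invmx W *m (Sel A)^T).
  by rewrite mulmxA /E rowsubE mulmxK // Sel_id.
have hs : (d1 + d2)%N = #|A|.
  apply/eqP; rewrite eqn_leq; apply/andP; split.
    rewrite -(eqP rfD) -HP2 (leq_trans (mxrankM_maxl _ _)) //.
    by rewrite EZ (leq_trans (mxrankM_maxr _ _)) // rank_leq_row.
  by rewrite -(eqP rfE) EY (leq_trans (mxrankM_maxr _ _)) // rank_leq_row.
have Pdot : forall x y, in_lat E x -> in_lat E y -> (x *m f) *m (y *m f)^T = x *m y^T.
  by move=> x y hx hy; apply: (polar Hiso); apply: in_lat_span.
have Portho : forall (a : 'I_d1) (b : 'I_d2),
    row (lshift d2 a) P *m (row (rshift d1 b) P)^T = 0.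
  move=> a b; rewrite -Pdot ?HP1 // -!(row_mul _ P f) HP2 /D /lat_dsum block_mxEv rowKu rowKd.
  by rewrite !row_row_mx !row0 tr_row_mx mul_row_col !trmx0 mulmx0 mul0mx addr0.
have dotP : forall r r' : 'I_(d1 + d2), (r < d1)%N -> ~~ (r' < d1)%N ->
    row r P *m (row r' P)^T = 0.
  move=> r r'; case: (splitP r) => [a Ea|b Eb] //.
  case: (splitP r') => [a' Ea'|b' Eb'] // _ _.
  have -> : r = lshift d2 a by apply: ord_inj.
  have -> : r' = rshift d1 b' by apply: ord_inj.
  exact: Portho.
have Eout : forall j x, j \notin A -> in_lat E x -> row j W *m x^T = 0.
  move=> j x jA [z ->]; rewrite trmx_mul mulmxA.
  have -> : row j W *m E^T = 0.
    apply/matrixP=> a k; rewrite mulT_entry row_rV /E rowsub_row Horth ?mxE //.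
    move: jA; rewrite !inE => jA; have := enum_valP k; rewrite inE => /eqP ->.
    done.
  by rewrite mul0mx.
have s_pos : (0 < #|A|)%N by rewrite -hs; case/andP: hd1 => h1 _; rewrite ltn_addr.
have i0A : @ev n A (Ordinal s_pos) \in A by apply: enum_valP.
pose h (i : 'I_n) : 'I_(d1 + d2) := cast_ord (esym hs) (enum_rank_in i0A i).
have hK : forall i, i \in A -> @ev n A (cast_ord hs (h i)) = i.
  by move=> i iA; rewrite /h cast_ordKV /ev enum_rankK_in.
have hsurj : forall r, h (@ev n A (cast_ord hs r)) = r.
  by move=> r; rewrite /h /ev enum_valK_in cast_ordK.
have evA : forall r, @ev n A (cast_ord hs r) \in A by move=> r; apply: enum_valP.
pose W' := \matrix_i (if i \in A then row (h i) P else row i W).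
have [t' t'f] : exists t' : 'I_n.+1, forall i, g i != t'.
  case: (pickP (fun t' : 'I_n.+1 => t' \notin [set g i | i : 'I_n])) => [t' Ht'|H0].
    exists t' => i; apply/eqP => E0; move/negP: Ht'; apply; rewrite -E0.
    by apply: imset_f.
  exfalso; have : [set: 'I_n.+1] \subset [set g i | i : 'I_n].
    by apply/subsetP => x _; move: (H0 x) => /negbFE.
  move/subset_leq_card; rewrite cardsT card_ord.
  have := leq_imset_card g 'I_n; rewrite card_ord => H1 H2.
  by have := leq_trans H2 H1; rewrite ltnn.
pose g' i := if i \in A then (if (h i < d1)%N then t else t') else g i.
have rowP' : forall r, row r P = row (@ev n A (cast_ord hs r)) W'.
  by move=> r; rewrite rowK evA hsurj.
exists W', g'; split; [split|].
- have W'W : forall i, in_lat W (row i W').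
    move=> i; rewrite rowK; case: ifP => iA; last exact: in_lat_row.
    apply: (in_lat_trans _ (HP1 (h i))) => k; rewrite /E rowsub_row.
    exact: in_lat_row.
  have WW' : forall i, in_lat W' (row i W).
    move=> i; case iA: (i \in A).
      rewrite -(hK i iA) -(rowsub_row (@ev n A) W) -/E.
      apply: (in_lat_trans _ (EinP _)) => r; rewrite rowP'.
      exact: in_lat_row.
    have <- : row i W' = row i W by rewrite rowK iA.
    exact: in_lat_row.
  move=> v; split => Hv.
    by apply/HL; apply: (in_lat_trans W'W Hv).
  by move/HL: Hv; apply: in_lat_trans.
- move=> i j; rewrite /g' !rowK; case iA: (i \in A); case jA: (j \in A).
  + case hi: (h i < d1)%N; case hj: (h j < d1)%N; rewrite ?eqxx // => _.
      by apply: dotP; rewrite ?hi ?hj.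
    by rewrite -dot_sym; apply: dotP; rewrite ?hi ?hj.
  + by move=> _; rewrite -dot_sym; apply: Eout; [rewrite jA | exact: HP1].
  + by move=> _; apply: Eout; [rewrite iA | exact: HP1].
  + exact: Horth.
- apply: proper_card; apply/properP; split.
  + apply/subsetP => -[i j]; rewrite !in_set /= /g'.
    case iA: (i \in A); case jA: (j \in A) => //.
    * by move: iA jA; rewrite !inE => /eqP -> /eqP ->; rewrite eqxx.
    * move: jA; rewrite inE => jA _.
      by case: ifP => _; rewrite eq_sym ?jA ?t'f.
    * move: iA; rewrite inE => iA _.
      by case: ifP => _; rewrite ?iA ?t'f.
  + have p1 : (0 < d1 + d2)%N by rewrite hs.
    have p2 : (d1 < d1 + d2)%N by rewrite -{1}(addn0 d1) ltn_add2l; case/andP: hd2.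
    exists (@ev n A (cast_ord hs (Ordinal p1)), @ev n A (cast_ord hs (Ordinal p2))).
      rewrite in_set /= /g' !evA !hsurj /=.
      case/andP: hd1 => -> _; rewrite ltnn.
      have := evA (Ordinal p1); rewrite inE => /eqP <-; exact: t'f.
    rewrite in_set /= negbK.
    have := evA (Ordinal p1); rewrite inE => /eqP ->.
    by have := evA (Ordinal p2); rewrite inE => /eqP ->.
Qed.


Lemma rowsub_free (W : 'M[R]_n) (A : {set 'I_n}) : W \in unitmx -> row_free (rowsub (@ev n A) W).
Proof.
move=> Wu; apply/row_freeP; exists (invmx W *m (Sel A)^T).
by rewrite mulmxA rowsubE mulmxK // Sel_id.
Qed.

Lemma step W g :
  (forall (d1 m1 d2 m2 : nat) (B1 : 'M[R]_(d1, m1)) (B2 : 'M[R]_(d2, m2)),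
      row_free B1 -> row_free B2 ->
      lat_iso B (lat_dsum B1 B2) ->
      (0 < d2)%N -> lat_indecomposable B2 ->
      d2 = 1%N) ->
  frame W g ->
  injective g \/ exists W' g', frame W' g' /\ (#|pairs g| < #|pairs g'|)%N.
Proof.
move=> Hdec Fr; case: (classic (injective g)) => [|nInj]; first by left.
right; have [i [j [ij Eij]]] : exists i j, i != j /\ g i = g j.
  apply: NNPP => H; apply: nInj => i j E; apply/eqP; apply: contraT => ne.
  by exfalso; apply: H; exists i, j; split.
set A := [set k | g k == g i].
case: (classic (lat_decomposable (rowsub (@ev n A) W))) => Hd.
  exact: (refine Fr Hd).
have Wu := frame_unit Fr; case: (Fr) => HL Horth.
have iA : i \in A by rewrite inE.
have jA : j \in A by rewrite inE Eij.
have Ho : forall i j, i \notin A -> j \in A -> row i W *m (row j W)^T = 0.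
  move=> i' j' i'A j'A; apply: Horth; move: i'A j'A; rewrite !inE => /negP ne /eqP ->.
  by apply/negP.
have := Hdec _ _ _ _ _ _ (rowsub_free (~:A) Wu) (rowsub_free A Wu)
  (iso_split Wu HL Ho).
have A0 : (0 < #|A|)%N by apply/card_gt0P; exists i.
move=> /(_ A0 Hd) A1; exfalso.
have : [set i; j] \subset A by apply/subsetP => x; rewrite !inE => /orP [] /eqP ->; rewrite ?Eij.
move/subset_leq_card; rewrite cards2 ij A1.
done.
Qed.

End Frame.
End L.

Unset Implicit Arguments.

Theorem corollary2p4 (R : realType) (n : nat) (B : 'M[R]_n) :
  row_free B ->
  lat_stable B ->
  (forall (d1 m1 d2 m2 : nat) (B1 : 'M[R]_(d1, m1)) (B2 : 'M[R]_(d2, m2)),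
      row_free B1 -> row_free B2 ->
      lat_iso B (lat_dsum B1 B2) ->
      (0 < d2)%N -> lat_indecomposable B2 ->
      d2 = 1%N) ->
  lat_iso B (1%:M : 'M[R]_n).
Proof.
move=> HB Hst Hdec.
have Hfr : frame B B (fun _ => ord0) by split => // i j; rewrite eqxx.
suff: forall (k : nat) (W : 'M[R]_n) (g : 'I_n -> 'I_n.+1),
    frame B W g -> (n * n - #|pairs g| <= k)%N -> lat_iso B (1%:M : 'M[R]_n).
  by move/(_ _ _ _ Hfr (leqnn _)).
elim=> [|k IH] W g Fr Hk;
  (case: (step HB Hdec Fr) => [gi|[W' [g' [Fr' Hlt]]]];
   [exact: (frame_final HB Fr gi Hst)|]);
  have := max_card (pairs g'); rewrite card_prod card_ord => Hm.
- exfalso; lia.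
- by apply: (IH _ _ Fr'); lia.
Qed.
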